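(* Let $\beta\in(0,\infty)$ and, for each $N\ge1$, let $K=K_N$ be a positive integer with $K_N/N\to\beta$. Let $\boldsymbol{S}\in\mathbb{R}^{N\times K}$ be a random time-hopping matrix with $N_{\mathsf s}=1$: its columns are independent, $\boldsymbol{s}_k=\epsilon_k\boldsymbol{e}_{\pi_k}$ with $\pi_k$ uniform on $\{1,\dots,N\}$ and $\epsilon_k$ uniform on $\{-1,+1\}$, all independent. Then, as $N\to\infty$, \[ r_N:=\frac{1}{N}\operatorname{rank}\boldsymbol{S}\ \xrightarrow{p}\ 1-e^{-\beta}. \]
   Context: $\boldsymbol{e}_i$ denotes the $i$th standard basis vector of $\mathbb{R}^N$; $\xrightarrow{p}$ denotes convergence in probability. *)

(* Defs.v *)
From HB Require Import structures.
From mathcomp Require Import all_boot all_order all_algebra.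
From mathcomp Require Import all_classical all_reals all_analysis.
Set Implicit Arguments. Unset Strict Implicit. Unset Printing Implicit Defensive.
Import Order.TTheory GRing.Theory Num.Theory.
Local Open Scope ring_scope.

(* A sample point for the time-hopping matrix with N_s = 1: for every column
   k < K a pair (pi_k, eps_k) with pi_k in {0..N-1} (= {1..N} shifted) and
   eps_k a sign (true = +1, false = -1). *)
Notation outcome N K := {ffun 'I_K -> 'I_N * bool}.

Definition th_matrix (R : fieldType) (N K : nat) (w : outcome N K) : 'M[R]_(N, K) :=
  \matrix_(i < N, k < K) (if (w k).1 == i then (if (w k).2 then 1 else -1) else 0).

Definition rank_ratio (R : fieldType) (N K : nat) (w : outcome N K) : R :=
  (\rank (th_matrix R w))%:R / N%:R.

(* Uniform probability on a finite sample space.  All pi_k, eps_k independent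
   and uniform  <=>  (pi, eps) uniform on outcome N K. *)
Definition unif_prob (R : numFieldType) (T : finType) (A : {pred T}) : R :=
  #|A|%:R / #|T|%:R.

(* Main.v *)
Require Import Defs.
From HB Require Import structures.
From mathcomp Require Import all_boot all_order all_algebra.
From mathcomp Require Import all_classical all_reals all_analysis.
From mathcomp Require Import zify ring lra.
Import Order.TTheory GRing.Theory Num.Theory.
Import numFieldTopology.Exports numFieldNormedType.Exports.
Set Implicit Arguments. Unset Strict Implicit.

Definition occ N K (w : outcome N K) : {set 'I_N} := [set (w k).1 | k in 'I_K].

Section Count.
Variables N K : nat.

Lemma card_allin (S : {set 'I_N}) :
  #|[set w : outcome N K | [forall k, (w k).1 \in S]]| = (#|S| * 2) ^ K.
Proof.
have -> : [set w : outcome N K | [forall k, (w k).1 \in S]] =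
          [set w in ffun_on [predX (mem S) & predT]].
  apply/setP => w; rewrite !inE; apply/forallP/ffun_onP => H k; have := H k;
  by rewrite !inE ?andbT.
rewrite cardsE card_ffun_on cardX card_ord; congr ((_ * _) ^ _).
by rewrite card_bool.
Qed.

Lemma subC_occ (B : {set 'I_N}) (w : outcome N K) :
  (B \subset ~: occ w) = [forall k, (w k).1 \in ~: B].
Proof.
apply/idP/idP => [/fintype.subsetP H|/forallP H].
  apply/forallP => k; rewrite inE; apply/negP => /H; rewrite inE => /negP; apply; apply/imsetP; by exists k.
apply/fintype.subsetP => i Hi; rewrite inE; apply/negP => /imsetP [k _ Hk]; have := H k; by rewrite inE -Hk Hi.
Qed.

Lemma card_T : #|{: outcome N K}| = (N * 2) ^ K.
Proof. by rewrite card_ffun card_prod card_ord card_bool card_ord. Qed.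

Lemma sumY : \sum_(w : outcome N K) #|~: occ w| = N * ((N.-1 * 2) ^ K).
Proof.
under eq_bigr => w _ do rewrite -sum1_card big_mkcond /=.
rewrite exchange_big /=.
rewrite (eq_bigr (fun _ => (N.-1 * 2) ^ K)); last first.
  move=> i _; rewrite -big_mkcond sum1_card /=.
  rewrite -[N.-1](congr1 predn (card_ord N)) -(cardsC1 i) -card_allin; apply: eq_card => w.
  by rewrite !inE -subC_occ finset.sub1set.
by rewrite sum_nat_const card_ord.
Qed.

Lemma sumY2 : \sum_(w : outcome N K) #|~: occ w| ^ 2 <=
  N * ((N.-1 * 2) ^ K) + N * (N * (((N - 2) * 2) ^ K)).
Proof.
under eq_bigr => w _ do rewrite expnS expn1 -cardsX -sum1_card big_mkcond /=.
rewrite exchange_big /=.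
rewrite (eq_bigr (fun p => (#|~: [set p.1; p.2]| * 2) ^ K)); last first.
  move=> [i j] _; rewrite -big_mkcond sum1_card /= -card_allin; apply: eq_card => w.
  rewrite [in RHS]inE -subC_occ finset.subUset !finset.sub1set.
  by rewrite -[LHS]/((i, j) \in finset.setX (~: occ w) (~: occ w)) finset.in_setX.
rewrite -(pair_bigA _ (fun i j => (#|~: [set i; j]| * 2) ^ K)) /=.
rewrite -mulnDr -[X in X * _](card_ord N) -sum_nat_const.
apply: leq_sum => i _.
rewrite (bigD1 i) //= finset.setUid -[N.-1](congr1 predn (card_ord N)) -(cardsC1 i) leq_add2l.
rewrite (eq_bigr (fun _ => ((N - 2) * 2) ^ K)); last first.
  move=> j Hj; congr ((_ * 2) ^ K); have := cardsC [set i; j]; rewrite cards2 card_ord eq_sym Hj.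
  move=> /=; lia.
rewrite sum_nat_const leq_mul2r leq_eqVlt cardC1 card_ord; apply/orP; right; lia.
Qed.

End Count.

Local Open Scope ring_scope.

Lemma sum_pick (R : ringType) n (a : 'I_n) (f : 'I_n -> R) :
  \sum_i (i == a)%:R * f i = f a.
Proof.
rewrite (bigD1 a) //= eqxx mul1r big1 ?addr0 // => i /negbTE ->; by rewrite mul0r.
Qed.


Lemma rank_th (R : fieldType) N K (w : outcome N K) :
  \rank (th_matrix R w) = #|occ w|.
Proof.
set S := th_matrix R w.
set m := #|occ w|.
pose e (j : 'I_m) : 'I_N := enum_val j.
have eA j : e j \in occ w by exact: enum_valP.
have einj : injective e by exact: enum_val_inj.
pose sg (k : 'I_K) : R := if (w k).2 then 1 else -1.
have sg2 k : sg k * sg k = 1 by rewrite /sg; case: (w k).2; rewrite ?mulr1 ?mulrNN ?mulr1.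
pose F : 'M[R]_(m, N) := \matrix_(j, i) ((i == e j)%:R).
have FS j k : (F *m S) j k = if (w k).1 == e j then sg k else 0.
  rewrite !mxE (eq_bigr (fun i => (i == e j)%:R * S i k)); last by move=> i _; rewrite mxE.
  by rewrite sum_pick /S mxE.
have occk k : (w k).1 \in occ w by apply/imsetP; exists k.
have C1 : S = F^T *m (F *m S).
  apply/matrixP => i k; rewrite [RHS]mxE.
  case: (boolP (i \in occ w)) => Hi.
    pose j0 : 'I_m := enum_rank_in Hi i.
    have ej0 : e j0 = i by rewrite /e /j0 enum_rankK_in.
    rewrite (eq_bigr (fun j => (j == j0)%:R * (F *m S) j k)); last first.
      move=> j _; rewrite !mxE.
      have -> // : (i == e j) = (j == j0).
      apply/eqP/eqP => [Hij|->]; last by rewrite ej0.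
      by apply: einj; rewrite -Hij ej0.
    by rewrite sum_pick FS ej0 /S mxE.
  transitivity (0:R); last first.
    symmetry; apply: big1 => j _; rewrite !mxE; case: eqP => [Hij|]; last by rewrite mul0r.
    by move: (eA j); rewrite -Hij (negbTE Hi).
  rewrite /S mxE; case: eqP => // Hk.
  by move: (occk k); rewrite Hk (negbTE Hi).
have ex j : exists k, (w k).1 == e j.
  by have /imsetP[k _ Hk] := eA j; exists k; rewrite -Hk.
pose kk j := xchoose (ex j).
have kkP j : (w (kk j)).1 = e j by apply/eqP; exact: (xchooseP (ex j)).
pose G : 'M[R]_(K, m) := \matrix_(k, j) ((k == kk j)%:R * sg k).
have C2 : (F *m S) *m G = 1%:M.
  apply/matrixP => j j'; rewrite !mxE.
  rewrite (eq_bigr (fun k => (k == kk j')%:R * ((F *m S) j k * sg k))); last first.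
    by move=> k _; rewrite [G _ _]mxE mulrCA.
  rewrite sum_pick FS kkP.
  have -> : (e j' == e j) = (j == j') by apply/eqP/eqP => [/einj->|->].
  by case: eqP => _; rewrite ?sg2 ?mul0r.
apply/eqP; rewrite eqn_leq; apply/andP; split.
  rewrite {1}C1; apply: leq_trans (mxrankM_maxr _ _) _; exact: rank_leq_row.
rewrite -{1}(mxrank1 R m) -C2; apply: leq_trans (mxrankM_maxl _ _) _.
exact: mxrankM_maxr.
Qed.

Lemma var_bound (R : realType) N K : (0 < N)%N -> (0 < K)%N ->
  \sum_(w : outcome N K) ((#|~: occ w|%:R : R) - N%:R * ((N.-1 * 2) ^ K)%:R / ((N * 2) ^ K)%:R) ^+ 2
   <= N%:R * ((N * 2) ^ K)%:R.
Proof.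
move=> N0 K0.
set Y := fun w : outcome N K => (#|~: occ w|%:R : R).
set c := N%:R * _ / _.
set a : R := ((N.-1 * 2) ^ K)%:R.
set b : R := (((N - 2) * 2) ^ K)%:R.
set T : R := ((N * 2) ^ K)%:R.
set n : R := N%:R.
have T0 : 0 < T by rewrite ltr0n expn_gt0 muln_gt0 N0.
have sY : \sum_w Y w = n * a by rewrite -natr_sum sumY natrM.
have sY2 : \sum_w Y w ^+ 2 <= n * a + n * (n * b).
  by rewrite -(eq_bigr _ (fun w _ => natrX _ _ _)) -natr_sum -!natrM -natrD ler_nat sumY2.
have bT : b * T <= a ^+ 2.
  rewrite -!natrM -natrX ler_nat -expnMn.
  have -> : (((N.-1 * 2) ^ K) ^ 2 = ((N.-1 * 2) ^ 2) ^ K)%N by rewrite expnAC.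
  rewrite leq_exp2r //.
  nia.
have aT : a <= T by rewrite ler_nat leq_exp2r //; nia.
have cardT : #|{: outcome N K}|%:R = T by rewrite card_T.
have -> : \sum_w (Y w - c) ^+ 2 = \sum_w Y w ^+ 2 - 2 * c * \sum_w Y w + c ^+ 2 * T.
  rewrite (eq_bigr (fun w => Y w ^+ 2 - (2 * c) * Y w + c ^+ 2)); last by move=> w _; ring.
  rewrite big_split sumrB /= -mulr_sumr sumr_const; congr (_ + _).
  by rewrite -mulr_natr /T -card_T.
have n0 : 0 <= n by rewrite ler0n.
have e1 : c ^+ 2 * T - 2 * c * (n * a) = - (n * a) ^+ 2 / T.
  by rewrite /c; field; rewrite gt_eqF.
have h1 : n * (n * b) <= (n * a) ^+ 2 / T.
  have h : 0 <= a ^+ 2 - b * T by rewrite subr_ge0.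
  rewrite ler_pdivlMr //; have := mulr_ge0 (mulr_ge0 n0 n0) h; nra.
have h2 : n * a <= n * T by rewrite ler_wpM2l.
rewrite sY; lra.
Qed.

Lemma prob_bound (R : realType) N K (E eps : R) : (0 < N)%N -> (0 < K)%N -> 0 < eps ->
  `|(1 - N%:R^-1) ^+ K - E| <= eps / 2 ->
  unif_prob R [pred w : outcome N K | eps < `|rank_ratio R w - (1 - E)|]
    <= 4 / eps ^+ 2 * N%:R^-1.
Proof.
move=> N0 K0 e0 hq.
pose Y := fun w : outcome N K => (#|~: occ w|%:R : R).
pose T : R := ((N * 2) ^ K)%:R.
pose a : R := ((N.-1 * 2) ^ K)%:R.
pose n : R := N%:R.
pose c : R := n * a / T.
pose q := (1 - n^-1) ^+ K.
have VB : \sum_w (Y w - c) ^+ 2 <= n * T by exact: (@var_bound R N K N0 K0).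
rewrite -/n -/q in hq; rewrite -/n.
have T0 : 0 < T by rewrite ltr0n expn_gt0 muln_gt0 N0.
have n0 : 0 < n by rewrite ltr0n.
have cq : c = n * q.
  rewrite /c /a /T /q /n; case: N N0 {VB Y c T a n T0 n0 hq q} => // M _ /=.
  rewrite !natrX -mulrA -expr_div_n; congr (_ * _ ^+ _).
  have M0 : (M.+1%:R : R) != 0 by rewrite pnatr_eq0.
  rewrite !natrM -[M.+1]addn1 natrD in M0 *; field; rewrite ?M0 //.
set d := n * eps / 2.
have d0 : 0 < d by rewrite /d divr_gt0 // mulr_gt0.
pose bad' := [pred w : outcome N K | d < `|Y w - c|].
have sub : [pred w : outcome N K | eps < `|rank_ratio R w - (1 - E)|] \subset bad'.
  apply/fintype.subsetP => w; rewrite !inE /rank_ratio rank_th.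
  have occE : (#|occ w|%:R : R) = n - Y w.
    by rewrite /n /Y; have := cardsC (occ w); rewrite card_ord => HN; apply/eqP; rewrite eq_sym subr_eq -natrD HN.
  rewrite occE -/n => hw.
  have e1 : (n - Y w) / n - (1 - E) = E - Y w / n.
    by field; rewrite gt_eqF.
  rewrite e1 in hw.
  have -> : Y w - c = n * (Y w / n - q) by rewrite cq; field; rewrite gt_eqF.
  rewrite normrM gtr0_norm // /d.
  have t := ler_distD q E (Y w / n).
  rewrite distrC in hq.
  have : eps / 2 < `|q - Y w / n| by lra.
  by rewrite -mulrA ltr_pM2l // distrC.
have markov : #|bad'|%:R * d ^+ 2 <= n * T.
  apply: le_trans VB; rewrite mulr_natl -sumr_const big_mkcond /=.
  apply: ler_sum => w _; case: ifP => H; last exact: sqr_ge0.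
  rewrite inE in H; rewrite -(real_normK (num_real (Y w - c))).
  have := ltW H; have := ltW d0; nra.
have cardT : (#|{: outcome N K}|%:R : R) = T by rewrite card_T.
rewrite /unif_prob cardT.
have c1 : leq #|[pred w : outcome N K | eps < `|rank_ratio R w - (1 - E)|]| #|bad'|.
  exact: subset_leq_card.
have c2 : (#|[pred w : outcome N K | eps < `|rank_ratio R w - (1 - E)|]|%:R : R) <= #|bad'|%:R.
  by rewrite ler_nat.
rewrite ler_pdivrMr //.
have : #|bad'|%:R <= n * T / d ^+ 2 by rewrite ler_pdivlMr // exprn_gt0.
have -> : n * T / d ^+ 2 = 4 / eps ^+ 2 * n^-1 * T.
  by rewrite /d; field; rewrite !gt_eqF.
lra.
Qed.

Local Open Scope classical_set_scope.
Unset Implicit Arguments.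

Lemma invN_cvg (R : realType) : (N%:R^-1 : R) @[N --> \oo] --> 0.
Proof.
rewrite gtr0_cvgV0; first exact: cvgr_idn.
near=> N; rewrite ltr0n; near: N; exists 1%N => //.
Unshelve. all: end_near.
Qed.

Lemma q_cvg (R : realType) (beta : R) (K : nat -> nat) :
  ((K N)%:R / N%:R : R) @[N --> \oo] --> beta ->
  (1 - N%:R^-1) ^+ K N @[N --> \oo] --> expR (- beta).
Proof.
move=> hK.
have up : expR (- ((K N)%:R / N%:R)) @[N --> \oo] --> expR (- beta).
  exact: (continuous_cvg _ (@continuous_expR R (- beta)) (cvgN hK)).
have lo : expR (- ((K N)%:R / N%:R / (1 - N%:R^-1))) @[N --> \oo] --> expR (- beta).
  have h1 : (1 - N%:R^-1 : R) @[N --> \oo] --> (1 : R).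
    rewrite -[X in _ --> X]subr0; apply: cvgB; [exact: cvg_cst | exact: invN_cvg].
  have h2 : ((K N)%:R / N%:R / (1 - N%:R^-1) : R) @[N --> \oo] --> beta.
    rewrite (_ : beta = beta * 1^-1); last by rewrite invr1 mulr1.
    apply: cvgM => //; exact: cvgV (oner_neq0 R) h1.
  exact: (continuous_cvg _ (@continuous_expR R (- beta)) (cvgN h2)).
apply: squeeze_cvgr lo up.
near=> N.
have N2 : (2 <= N)%N by near: N; exists 2%N.
set y : R := N%:R^-1.
have y0 : 0 < y by rewrite invr_gt0 ltr0n; lia.
have y1 : y <= 2^-1.
  rewrite /y lef_pV2 ?posrE ?ltr0n //; first by rewrite ler_nat.
  by lia.
apply/andP; split.
- set x := y / (1 - y).
  have h1y : 0 < 1 - y by lra.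
  have e1 : - ((K N)%:R * y / (1 - y)) = (K N)%:R * - x.
    by rewrite /x; field; rewrite (gt_eqF h1y).
  rewrite e1 expRM_natl; apply: lerXn2r; rewrite ?nnegrE ?expR_ge0 //; first lra.
  rewrite expRN -[X in _ <= X]invrK lef_pV2 ?posrE ?expR_gt0 ?invr_gt0 //.
  have := expR_ge1Dx x; have -> : 1 + x = (1 - y)^-1 by rewrite /x; field; lra.
  done.
- have e1 : - ((K N)%:R / N%:R) = (K N)%:R * - y by rewrite /y; ring.
  rewrite e1 expRM_natl; apply: lerXn2r; rewrite ?nnegrE ?expR_ge0 //; first lra.
  by have := expR_ge1Dx (- y).
Unshelve. all: end_near.
Qed.

Theorem corollary2 (R : realType) (beta : R) (K : nat -> nat) :
  0 < beta ->
  (forall N, (0 < K N)%N) ->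
  ((K N)%:R / N%:R : R) @[N --> \oo] --> beta ->
  forall eps : R, 0 < eps ->
    unif_prob R
       [pred w : outcome N (K N) |
          eps < `| rank_ratio R w - (1 - expR (- beta)) | ] @[N --> \oo] --> (0 : R).
Proof.
move=> b0 Kpos hK eps e0.
have hq := @q_cvg R beta K hK.
have e2 : 0 < eps / 2 by lra.
have /cvgrPdist_le/(_ _ e2) hnear := hq.
have hh : (4 / eps ^+ 2 * N%:R^-1 : R) @[N --> \oo] --> (0 : R).
  rewrite -(mulr0 (4 / eps ^+ 2)); apply: cvgMl_tmp; exact: invN_cvg.
apply: (squeeze_cvgr _ (cvg_cst (0 : R)) hh).
near=> N.
have N1 : (0 < N)%N by near: N; exists 1%N.
apply/andP; split.
  by rewrite /unif_prob divr_ge0.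
apply: prob_bound => //; rewrite distrC.
by near: N.
Unshelve. all: end_near.
Qed.
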